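(* Consider a product state $|\phi^{(L)}\rangle\otimes|\phi^{(R)}\rangle$ in which two modes of each factor form a dual-rail qubit, and these four modes are input to Type I fusion. Assume the fusion heralds success and that the four input modes indeed carry a pair of dual-rail qubits, so that (with modes suitably permuted, listing the left qubit's modes then the right qubit's modes) the terms affecting a successful fusion are $c^{(L)}_{10}c^{(R)}_{10}|\phi^{(L)}_{10}\rangle|\phi^{(R)}_{10}\rangle|1,0,1,0\rangle + c^{(L)}_{01}c^{(R)}_{01}|\phi^{(L)}_{01}\rangle|\phi^{(R)}_{01}\rangle|0,1,0,1\rangle$, with the internal states of the input photons pure. If the relevant input photons are all ideal (mutually indistinguishable), the output state is (up to normalization) $c^{(L)}_{10}c^{(R)}_{10}|\phi^{(L)}_{10}\rangle|\phi^{(R)}_{10}\rangle|1,0\rangle\pm c^{(L)}_{01}c^{(R)}_{01}|\phi^{(L)}_{01}\rangle|\phi^{(R)}_{01}\rangle|0,1\rangle$, with sign $+$ for measurement pattern $(1,0)$ and $-$ for $(0,1)$. If the photons are fully distinguishable, then for either measurement outcome the output state is the even mixture of the two unentangled states $c^{(L)}_{10}c^{(R)}_{10}|\phi^{(L)}_{10}\rangle|\phi^{(R)}_{10}\rangle|1,0\rangle$ and $c^{(L)}_{01}c^{(R)}_{01}|\phi^{(L)}_{01}\rangle|\phi^{(R)}_{01}\rangle|0,1\rangle$.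
   Context: Photonic model: $a_i^\dagger(\xi)$ creates a photon in spatial mode $i$ with internal state $|\xi\rangle$; linear optics acts on spatial modes only; photon-number-resolving (PNR) detection reveals only photon number per spatial mode, and post-measurement states are obtained by projecting and tracing out internal states of measured photons. A dual-rail qubit is a pair of modes with basis $|\mathbf 0\rangle=|1,0\rangle$, $|\mathbf 1\rangle=|0,1\rangle$. Hadamard beamsplitter on ordered pair $(p,q)$: $a_p^\dagger\mapsto(a_p^\dagger+a_q^\dagger)/\sqrt2$, $a_q^\dagger\mapsto(a_p^\dagger-a_q^\dagger)/\sqrt2$. Generalized $X$ measurement on two modes: apply the Hadamard beamsplitter, PNR-measure both, post-select on exactly one photon total (pattern $(1,0)$ or $(0,1)$). Type I fusion of two dual-rail qubits with modes $(1,2)$ and $(3,4)$: perform a generalized $X$ measurement on the two middle modes $(2,3)$; on success the unmeasured modes $(1,4)$ are treated as a single dual-rail qubit. ''Ideal''/''fully distinguishable'' mean pairwise internal-state overlaps $1$/$0$. *)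

(* Defs.v *)
(* First-quantized model of the two-photon sector of four
   spatial modes (paper's modes 1..4 = ordinals 0..3), each photon carrying a
   spatial mode and a pure internal state in C^d, tensored with an abstract
   "rest" system (the states |phi^{(L)}>, |phi^{(R)}> of the other modes). *)
From HB Require Import structures.
From mathcomp Require Import all_boot all_order all_algebra.
Set Implicit Arguments. Unset Strict Implicit. Unset Printing Implicit Defensive.
Import Order.TTheory GRing.Theory Num.Theory.
Local Open Scope ring_scope.

Definition m1 : 'I_4 := @Ordinal 4 0 isT.
Definition m2 : 'I_4 := @Ordinal 4 1 isT.
Definition m3 : 'I_4 := @Ordinal 4 2 isT.
Definition m4 : 'I_4 := @Ordinal 4 3 isT.

Section Photonics.
Variable C : numClosedFieldType.
Variables d mL mR : nat.

(* index of the rest system: left factor rest (x) right factor rest *)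
Definition env := ('I_mL * 'I_mR)%type.
Definition plabel := ('I_4 * 'I_d)%type.
Definition istate := 'I_d -> C.
(* two-photon (first-quantized, symmetric) wavefunction tensored with rest *)
Definition state2 := env -> plabel -> plabel -> C.
(* density operator on rest (x) one remaining photon *)
Definition dens := env * plabel -> env * plabel -> C.

Definition overlap (u v : istate) : C := \sum_k (u k)^* * v k.

Definition delta (i j : 'I_4) : C := (i == j)%:R.

(* a_i^dag(u) a_j^dag(v) |vac> in first quantization (symmetrized) *)
Definition sym2 (i : 'I_4) (u : istate) (j : 'I_4) (v : istate) :
  plabel -> plabel -> C :=
  fun x y => delta x.1 i * u x.2 * (delta y.1 j * v y.2)
           + delta x.1 j * v x.2 * (delta y.1 i * u y.2).

Definition prodenv (f : 'I_mL -> C) (g : 'I_mR -> C) : env -> C :=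
  fun e => f e.1 * g e.2.

(* The input |phi^L> (x) |phi^R>, restricted (by hypothesis of the paper) to
   its components in which modes (1,2) carry a dual-rail qubit and modes (3,4)
   carry a dual-rail qubit:
     (cL10 |phL10>|1,0> + cL01 |phL01>|0,1>) (x) (cR10 |phR10>|1,0> + cR01 |phR01>|0,1>)
   with pure internal states xL10 (photon in mode 1), xL01 (mode 2),
   xR10 (mode 3), xR01 (mode 4). *)
Definition dual_rail_input (cL10 cL01 cR10 cR01 : C)
  (phL10 phL01 : 'I_mL -> C) (phR10 phR01 : 'I_mR -> C)
  (xL10 xL01 xR10 xR01 : istate) : state2 :=
  fun e x y =>
      cL10 * cR10 * prodenv phL10 phR10 e * sym2 m1 xL10 m3 xR10 x y
    + cL10 * cR01 * prodenv phL10 phR01 e * sym2 m1 xL10 m4 xR01 x y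
    + cL01 * cR10 * prodenv phL01 phR10 e * sym2 m2 xL01 m3 xR10 x y
    + cL01 * cR01 * prodenv phL01 phR01 e * sym2 m2 xL01 m4 xR01 x y.

(* Linear optics on spatial modes only: a_p^dag |-> \sum_q U q p a_q^dag,
   acting identically on internal states, applied to both photons. *)
Definition lin_optics (U : 'M[C]_4) (Psi : state2) : state2 :=
  fun e x y => \sum_(p < 4) \sum_(q < 4) U x.1 p * U y.1 q * Psi e (p, x.2) (q, y.2).

(* Hadamard beamsplitter on ordered pair (p,q):
   a_p^dag |-> (a_p^dag + a_q^dag)/sqrt2, a_q^dag |-> (a_p^dag - a_q^dag)/sqrt2 *)
Definition hadamard_bs (p q : 'I_4) : 'M[C]_4 :=
  let s := (sqrtC (2 : C))^-1 in
  \matrix_(r, c)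
    (if c == p then (if r == p then s else if r == q then s else 0)
     else if c == q then (if r == p then s else if r == q then - s else 0)
     else (r == c)%:R).

Definition nphot (i : 'I_4) (x y : plabel) : nat := (x.1 == i) + (y.1 == i).

Definition pnr_project (p q : 'I_4) (np nq : nat) (Psi : state2) : state2 :=
  fun e x y => if (nphot p x y == np) && (nphot q x y == nq) then Psi e x y else 0.

(* Post-measurement (unnormalized) state: trace out the measured photon
   (its mode lies in [meas]; internal state traced out), keeping the rest
   system and the remaining photon, which lies in an unmeasured mode. *)
Definition trace_measured (meas : pred 'I_4) (Psi : state2) : dens :=
  fun a b =>
    if ~~ meas a.2.1 && ~~ meas b.2.1 then
      \sum_(w : plabel | meas w.1) Psi a.1 a.2 w * (Psi b.1 b.2 w)^*
    else 0.

(* Type I fusion of dual-rail qubits (1,2) and (3,4): generalized X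
   measurement on (2,3) with PNR outcome (n2, n3); output on modes (1,4). *)
Definition typeI_fusion (n2 n3 : nat) (Psi : state2) : dens :=
  trace_measured (fun i => (i == m2) || (i == m3))
    (pnr_project m2 m3 n2 n3 (lin_optics (hadamard_bs m2 m3) Psi)).

Definition outer (v : env * plabel -> C) : dens := fun a b => v a * (v b)^*.

Definition branch (c : C) (ps : env -> C) (i : 'I_4) (u : istate) :
  env * plabel -> C :=
  fun a => c * ps a.1 * delta a.2.1 i * u a.2.2.

Definition normalized4 (a b c e : istate) : Prop :=
  [/\ overlap a a = 1, overlap b b = 1, overlap c c = 1 & overlap e e = 1].

Definition pairwise_overlaps4 (k : C) (a b c e : istate) : Prop :=
  [/\ overlap a b = k, overlap a c = k, overlap a e = k & overlap b c = k]
  /\ (overlap b e = k /\ overlap c e = k).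

Definition ideal_photons (a b c e : istate) : Prop :=
  normalized4 a b c e /\ pairwise_overlaps4 1 a b c e.

Definition distinguishable_photons (a b c e : istate) : Prop :=
  normalized4 a b c e /\ pairwise_overlaps4 0 a b c e.

End Photonics.

(* Main.v *)
Require Import Defs.
From HB Require Import structures.
From mathcomp Require Import all_boot all_order all_algebra ring.
Import Order.TTheory GRing.Theory Num.Theory.
Set Implicit Arguments. Unset Strict Implicit.
Local Open Scope ring_scope.

Section Aux.
Variable C : numClosedFieldType.
Variable d : nat.

Lemma sum_delta (f : 'I_4 -> C) i : \sum_(p < 4) delta C p i * f p = f i.
Proof.
rewrite (bigD1 i) //= /delta eqxx mul1r big1 ?addr0 // => p /negbTE ->.
by rewrite mul0r.
Qed.

Definition LO (U : 'M[C]_4) (S : plabel d -> plabel d -> C) (x y : plabel d) :=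
  \sum_(p < 4) \sum_(q < 4) U x.1 p * U y.1 q * S (p, x.2) (q, y.2).

Lemma lo_sym U x y i (u : istate C d) j v :
  LO U (sym2 i u j v) x y = U x.1 i * u x.2 * (U y.1 j * v y.2)
                          + U x.1 j * v x.2 * (U y.1 i * u y.2).
Proof.
rewrite /LO /sym2 /=.
transitivity (\sum_(p < 4) (delta C p i * (U x.1 p * u x.2 *
   \sum_(q < 4) (delta C q j * (U y.1 q * v y.2)))
  + delta C p j * (U x.1 p * v x.2 * \sum_(q < 4) (delta C q i * (U y.1 q * u y.2))))).
  apply: eq_bigr => p _; rewrite !mulr_sumr -big_split; apply: eq_bigr => q _ /=.
  ring.
by rewrite big_split /= !sum_delta.
Qed.

Lemma sum_meas (F : plabel d -> C) :
  \sum_(w : plabel d | (w.1 == m2) || (w.1 == m3)) F w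
  = \sum_(l < d) (F (m2, l) + F (m3, l)).
Proof.
rewrite (eq_bigl (fun w : plabel d => ((w.1 == m2) || (w.1 == m3)) && xpredT w.2)); last first.
  by move=> w; rewrite andbT.
rewrite (eq_bigr (fun w : plabel d => F (w.1, w.2))); last by case.
rewrite -(pair_big (fun i : 'I_4 => (i == m2) || (i == m3)) xpredT (fun i l => F (i, l))) /=.
rewrite exchange_big /=; apply: eq_bigr => l _.
rewrite big_mkcond !big_ord_recl big_ord0 /=.
rewrite !add0r addr0.
by congr (F (_, _) + F (_, _)); apply: val_inj.
Qed.

Lemma overlap_conj (u v : istate C d) : overlap v u = (overlap u v)^*.
Proof.
rewrite /overlap rmorph_sum; apply: eq_bigr => k _.
by rewrite rmorphM /= conjCK mulrC.
Qed.

Definition ov (u v : istate C d) := \sum_(l < d) u l * (v l)^*.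

Lemma ovE (u v : istate C d) : ov u v = overlap v u.
Proof. by rewrite /ov /overlap; apply: eq_bigr => k _; rewrite mulrC. Qed.

Lemma overlap_eq (u v : istate C d) :
  overlap u u = 1 -> overlap v v = 1 -> overlap u v = 1 -> forall k, v k = u k.
Proof.
move=> Hu Hv Huv k.
have Hvu : overlap v u = 1 by rewrite overlap_conj Huv rmorph1.
have H0 : \sum_(l < d) `|u l - v l| ^+ 2 = 0.
  transitivity (overlap u u - overlap u v - overlap v u + overlap v v); last first.
    by rewrite Hu Hv Huv Hvu; ring.
  rewrite /overlap -!sumrB -big_split /=; apply: eq_bigr => l _.
  rewrite normCKC rmorphB /=; ring.
have := psumr_eq0P (fun l _ => exprn_ge0 2 (normr_ge0 (u l - v l))) H0 (i := k) isT.
move/eqP; rewrite sqrf_eq0 normr_eq0 subr_eq0 => /eqP ->.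
done.
Qed.

End Aux.
Section Main.
Variable C : numClosedFieldType.
Variables d mL mR : nat.
Variables (cL10 cL01 cR10 cR01 : C)
  (phL10 phL01 : 'I_mL -> C) (phR10 phR01 : 'I_mR -> C)
  (xL10 xL01 xR10 xR01 : 'I_d -> C).

Let Psi := dual_rail_input cL10 cL01 cR10 cR01 phL10 phL01 phR10 phR01
                             xL10 xL01 xR10 xR01.

Lemma LOPsi U e x y : lin_optics U Psi e x y =
    cL10 * cR10 * prodenv phL10 phR10 e * LO U (sym2 m1 xL10 m3 xR10) x y
  + cL10 * cR01 * prodenv phL10 phR01 e * LO U (sym2 m1 xL10 m4 xR01) x y
  + cL01 * cR10 * prodenv phL01 phR10 e * LO U (sym2 m2 xL01 m3 xR10) x y
  + cL01 * cR01 * prodenv phL01 phR01 e * LO U (sym2 m2 xL01 m4 xR01) x y.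
Proof.
rewrite /lin_optics /LO /Psi /dual_rail_input.
rewrite !mulr_sumr -!big_split; apply: eq_bigr => p _ /=.
rewrite !mulr_sumr -!big_split; apply: eq_bigr => q _ /=.
ring.
Qed.

Definition A (a : env mL mR * plabel d) :=
  branch (cL10 * cR10) (prodenv phL10 phR10) m1 xL10 a.
Definition B (a : env mL mR * plabel d) :=
  branch (cL01 * cR01) (prodenv phL01 phR01) m4 xR01 a.

Let s := (sqrtC (2 : C))^-1.

Lemma rho_formula n2 n3 : (n2 + n3 = 1)%N -> forall a b,
  typeI_fusion n2 n3 Psi a b =
  s * s^* * \sum_(l < d) (((-1) ^+ n3 * A a * xR10 l + B a * xL01 l)
                          * ((-1) ^+ n3 * A b * xR10 l + B b * xL01 l)^*).
Proof.
move=> Hn.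
have [[-> ->]|[-> ->]] : (n2 = 1 /\ n3 = 0 \/ n2 = 0 /\ n3 = 1)%N.
  by move: Hn; case: n2 n3 => [|[|n2]] [|[|n3]] //= _; [right|left].
all: move=> [e [i k]] [e' [i' k']].
all: rewrite /typeI_fusion /trace_measured /= sum_meas /A /B /branch /=.
all: case: i => [[|[|[|[|i]]]] Hi] //; case: i' => [[|[|[|[|i']]]] Hi'] //.
all: rewrite /delta /prodenv /s /= ?expr0 ?expr1 mulr_sumr.
all: try (symmetry; apply: big1 => l _).
all: try (apply: eq_bigr => l _).
all: rewrite /pnr_project /nphot /= ?LOPsi ?lo_sym /= ?mxE /=.
all: rewrite ?(rmorphD, rmorphM, rmorphN, rmorph1, rmorph0, rmorphMn) /=.
all: rewrite /prodenv /s; ring.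
Qed.
End Main.
Unset Implicit Arguments.
Set Strict Implicit.
Theorem proposition2 (C : numClosedFieldType) (d mL mR : nat)
  (cL10 cL01 cR10 cR01 : C)
  (phL10 phL01 : 'I_mL -> C) (phR10 phR01 : 'I_mR -> C)
  (xL10 xL01 xR10 xR01 : 'I_d -> C) (n2 n3 : nat) :
  (n2 + n3 = 1)%N ->
  let Psi := dual_rail_input cL10 cL01 cR10 cR01 phL10 phL01 phR10 phR01
                             xL10 xL01 xR10 xR01 in
  let rho := typeI_fusion n2 n3 Psi in
  let alpha := cL10 * cR10 in
  let beta := cL01 * cR01 in
  let psa := prodenv phL10 phR10 in
  let psb := prodenv phL01 phR01 in
  (ideal_photons xL10 xL01 xR10 xR01 ->
     exists lam : C, 0 < lam /\
       forall a b, rho a b =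
         lam * outer (fun z => branch alpha psa m1 xL10 z
                               + (-1) ^+ n3 * branch beta psb m4 xL10 z) a b)
  /\
  (distinguishable_photons xL10 xL01 xR10 xR01 ->
     exists lam : C, 0 < lam /\
       forall a b, rho a b =
         lam * (outer (branch alpha psa m1 xL10) a b
                + outer (branch beta psb m4 xR01) a b)).
Proof.
move=> Hn Psi rho alpha beta psa psb.
set s := (sqrtC (2 : C))^-1.
have Hs : 0 < s * s^*.
  by rewrite mul_conjC_gt0 invr_eq0 sqrtC_eq0 pnatr_eq0.
have Hrho := rho_formula cL10 cL01 cR10 cR01 phL10 phL01 phR10 phR01
                         xL10 xL01 xR10 xR01 Hn.
set Af := A cL10 cR10 phL10 phR10 xL10 in Hrho.
set Bf := B cL01 cR01 phL01 phR01 xR01 in Hrho.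
have Esum : forall (sg : C) a b,
  \sum_(l < d) ((sg * Af a * xR10 l + Bf a * xL01 l)
                * (sg * Af b * xR10 l + Bf b * xL01 l)^*)
  = sg * sg^* * Af a * (Af b)^* * ov xR10 xR10 + sg * Af a * (Bf b)^* * ov xR10 xL01
    + sg^* * Bf a * (Af b)^* * ov xL01 xR10 + Bf a * (Bf b)^* * ov xL01 xL01.
  move=> sg a b; rewrite /ov !mulr_sumr -!big_split; apply: eq_bigr => l _ /=.
  rewrite !(rmorphD, rmorphM) /=; ring.
have Hn3 : n3 = 0%N \/ n3 = 1%N.
  have : (n3 <= 1)%N by rewrite -Hn leq_addl.
  by rewrite leq_eqVlt ltnS leqn0 => /orP [/eqP E|/eqP E]; [right|left].
have Hsg : ((-1) ^+ n3 : C)^* = (-1) ^+ n3 /\ (-1) ^+ n3 * (-1) ^+ n3 = 1 :> C.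
  by case: Hn3 => E; rewrite E ?expr0 ?expr1 ?rmorphN1 ?rmorph1 ?mulrNN mulr1.
case: Hsg => Hc Hsq.
split.
  move=> [[o1 o2 o3 o4] [[p1 p2 p3 p4] [p5 p6]]].
  exists (s * s^*); split => // a b.
  rewrite /rho Hrho Esum !ovE Hc Hsq o3 p4 (overlap_conj xL01 xR10) p4 o2 rmorph1.
  have Heq := overlap_eq o1 o4 p3.
  rewrite /outer /Af /Bf /A /B /branch !Heq.
  rewrite !(rmorphD, rmorphM) /= Hc.
  rewrite /s /alpha /beta /psa /psb /prodenv.
  by case: Hn3 => E; rewrite E ?expr0 ?expr1; ring.
move=> [[o1 o2 o3 o4] [[p1 p2 p3 p4] [p5 p6]]].
exists (s * s^*); split => // a b.
rewrite /rho Hrho Esum !ovE Hc Hsq o3 p4 (overlap_conj xL01 xR10) p4 o2 rmorph0.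
rewrite /outer /Af /Bf /A /B /branch.
rewrite !(rmorphD, rmorphM) /=.
rewrite /s /alpha /beta /psa /psb /prodenv.
by case: Hn3 => E; rewrite E ?expr0 ?expr1; ring.
Qed.
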